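(* A polynomial $P\in\mathbb F[x]$ is irreducible over $\mathbb F=\mathfrak K(t)$ if and only if $P$ is irreducible over the ultra-hull $\mathcal U(\mathbb F)$.
   Context: Let $S$ be an infinite set and $\mathcal D$ a nonprincipal ultrafilter on $S$. Ultraproducts $\prod_{s}A_s/\mathcal D$ are tuples modulo agreement on a set in $\mathcal D$; the class of $(a_s)$ is written $\mathrm{ulim}_s a_s$; operations are componentwise. For each $s$ let $\mathbb F_s$ be an arbitrary field, $\mathfrak A_s=\mathbb F_s[t]$, $\mathfrak F_s=\mathbb F_s(t)$. Let $\mathfrak K=\prod_s\mathbb F_s/\mathcal D$, $\mathbb A=\mathfrak K[t]$, $\mathbb F=\mathfrak K(t)$, and the ultra-hull $\mathcal U(\mathbb F)=\prod_s\mathfrak F_s/\mathcal D$. The ring $\mathbb A$ is identified with a subring of $\prod_s\mathfrak A_s/\mathcal D$ via $\sum_i(\mathrm{ulim}_s a_{i,s})t^i\mapsto \mathrm{ulim}_s\sum_i a_{i,s}t^i$, and hence $\mathbb F$ with a subfield of $\mathcal U(\mathbb F)$; thus $\mathbb F[x]\subseteq\mathcal U(\mathbb F)[x]$. *)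

(* Defs.v *)
From HB Require Import structures.
From mathcomp Require Import all_boot all_order all_algebra.
From mathcomp Require Import generic_quotient.
From mathcomp Require Import boolp classical_sets filter cardinality.
Set Implicit Arguments. Unset Strict Implicit. Unset Printing Implicit Defensive.
Import Order.TTheory GRing.Theory Num.Theory.
Local Open Scope ring_scope.
Local Open Scope classical_set_scope.
Local Open Scope quotient_scope.

(* Ultraproduct  prod_s F_s / D  of a family of fields F : S -> fieldType
   along an ultrafilter D on S, built as the quotient of the product ring
   by the ideal { a | {s | a_s = 0} \in D }.                             *)

Section Ultraproduct.
Variables (S : Type) (D : set_system S) (DU : UltraFilter D)
          (F : S -> fieldType).

Definition prodR := forall s, F s.
HB.instance Definition _ := Choice.copy prodR (forall s : S, F s).

Definition prodR0 : prodR := fun s => 0.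
Definition prodR1 : prodR := fun s => 1.
Definition prodRopp (x : prodR) : prodR := fun s => - x s.
Definition prodRadd (x y : prodR) : prodR := fun s => x s + y s.
Definition prodRmul (x y : prodR) : prodR := fun s => x s * y s.

Lemma prodRaddA : associative prodRadd.
Proof. by move=> x y z; apply: functional_extensionality_dep => s; rewrite /prodRadd addrA. Qed.
Lemma prodRaddC : commutative prodRadd.
Proof. by move=> x y; apply: functional_extensionality_dep => s; rewrite /prodRadd addrC. Qed.
Lemma prodRadd0 : left_id prodR0 prodRadd.
Proof. by move=> x; apply: functional_extensionality_dep => s; rewrite /prodRadd add0r. Qed.
Lemma prodRaddN : left_inverse prodR0 prodRopp prodRadd.
Proof. by move=> x; apply: functional_extensionality_dep => s; rewrite /prodRadd addNr. Qed.

HB.instance Definition _ :=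
  GRing.isZmodule.Build prodR prodRaddA prodRaddC prodRadd0 prodRaddN.

Lemma prodRmulA : associative prodRmul.
Proof. by move=> x y z; apply: functional_extensionality_dep => s; rewrite /prodRmul mulrA. Qed.
Lemma prodRmulC : commutative prodRmul.
Proof. by move=> x y; apply: functional_extensionality_dep => s; rewrite /prodRmul mulrC. Qed.
Lemma prodRmul1 : left_id prodR1 prodRmul.
Proof. by move=> x; apply: functional_extensionality_dep => s; rewrite /prodRmul mul1r. Qed.
Lemma prodRmulDl : left_distributive prodRmul +%R.
Proof. by move=> x y z; apply: functional_extensionality_dep => s; rewrite /prodRmul /= /prodRadd mulrDl. Qed.

Lemma ultra_inhabited : exists s : S, True.
Proof.
apply: contrapT => /forallNP H.
have FD : ProperFilter D := @ultra_proper _ _ DU.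
apply: (filter_not_empty D).
suff -> : set0 = [set: S] by exact: filterT.
by apply/seteqP; split => // s _; case: (H s).
Qed.

Lemma prodR1_neq0 : prodR1 != (0 : prodR).
Proof.
apply/eqP => /(congr1 (fun f : prodR => f)) e.
have [s _] := ultra_inhabited.
by move: (congr1 (fun f => f s) e) => /= /eqP; rewrite oner_eq0.
Qed.

HB.instance Definition _ := GRing.Zmodule_isComNzRing.Build prodR
  prodRmulA prodRmulC prodRmul1 prodRmulDl prodR1_neq0.

Definition nullD : prodR -> bool := fun x => `[< D [set s | x s = 0] >].

Lemma nullD_ideal : idealr_closed nullD.
Proof.
have FD : ProperFilter D := @ultra_proper _ _ DU.
split.
- apply/asboolP; apply: filterS filterT => s _ //.
- apply/negP => /asboolP H; apply: (filter_not_empty D).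
  by apply: filterS H => s /= /eqP; rewrite oner_eq0.
- move=> a u v /asboolP Hu /asboolP Hv; apply/asboolP.
  apply: filterS (filterI Hu Hv) => s [/= us vs].
  by rewrite /GRing.mul /= /prodRmul /GRing.add /= /prodRadd us vs mulr0 addr0.
Qed.

HB.instance Definition _ := isIdealr.Build prodR nullD nullD_ideal.

Definition nullI : idealr prodR := nullD.
Definition ultraprod_ring := {ideal_quot nullI}.
HB.instance Definition _ := GRing.ComNzRing.on ultraprod_ring.

Definition ultra_inv (x : ultraprod_ring) : ultraprod_ring :=
  \pi_ultraprod_ring (fun s => (repr x s)^-1 : F s).

Lemma ultra_mulVf (x : ultraprod_ring) : x != 0 -> ultra_inv x * x = 1.
Proof.
have FD : ProperFilter D := @ultra_proper _ _ DU.
move=> x0; rewrite /ultra_inv -[in X in _ * X](reprK x) -pi_mulr -pi_oner.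
apply/eqP; rewrite piE Quotient.equivE; apply/asboolP.
have nx : ~ D [set s | repr x s = 0].
  move=> H; move/eqP: x0; apply; rewrite -(reprK x) -pi_zeror.
  by apply/eqP; rewrite piE Quotient.equivE subr0; apply/asboolP.
have [H|H] := in_ultra_setVsetC [set s | repr x s = 0] DU; first by [].
apply: filterS H => s /= xs.
rewrite /GRing.add /= /prodRadd /GRing.opp /= /prodRopp /GRing.mul /= /prodRmul.
by rewrite /GRing.one /= /prodR1 mulVf ?subrr //; apply/eqP.
Qed.

Lemma ultra_inv0 : ultra_inv 0 = 0.
Proof.
have FD : ProperFilter D := @ultra_proper _ _ DU.
have : \pi_ultraprod_ring (repr (0 : ultraprod_ring)) ==
       \pi_ultraprod_ring (0 : prodR) by rewrite reprK pi_zeror.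
rewrite piE Quotient.equivE => /asboolP H0.
rewrite /ultra_inv; transitivity (\pi_ultraprod_ring (0 : prodR));
  last exact: pi_zeror.
apply/eqP; rewrite piE Quotient.equivE; apply/asboolP.
apply: filterS H0 => s /=.
rewrite /GRing.add /= /prodRadd /GRing.opp /= /prodRopp /GRing.zero /= /prodR0.
by rewrite !subr0 => ->; rewrite invr0.
Qed.

Definition ultraprod := ultraprod_ring.
HB.instance Definition _ := GRing.ComNzRing.on ultraprod.
HB.instance Definition _ :=
  GRing.ComNzRing_isField.Build ultraprod ultra_mulVf ultra_inv0.

Definition ulim (a : forall s, F s) : ultraprod := \pi_ultraprod_ring a.

End Ultraproduct.

(* The setting of the paper:  K = prod F_s / D,  A = K[t],  F = K(t),
   U(F) = prod F_s(t) / D, and the identification of F with a subfield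
   of U(F).                                                            *)
Section Setting.
Variables (S : Type) (D : set_system S) (DU : UltraFilter D)
          (F : S -> fieldType).

Definition fK : fieldType := ultraprod DU F.
Definition fF : fieldType := {fraction {poly fK}}.
Definition ultrahull : fieldType :=
  ultraprod DU (fun s => ({fraction {poly F s}} : fieldType)).

Definition A_to_U (p : {poly fK}) : ultrahull :=
  ulim DU (fun s => (tofrac (\poly_(i < size p) (repr (p`_i : fK) : prodR F) s)
                      : {fraction {poly F s}})).

Definition F_to_U (x : fF) : ultrahull :=
  A_to_U (\n_(repr x)) / A_to_U (\d_(repr x)).

End Setting.

Arguments A_to_U {S D} DU F p.
Arguments F_to_U {S D} DU F x.

(* Main.v *)
Require Import Defs.
From HB Require Import structures.
From mathcomp Require Import all_boot all_order all_algebra.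
From mathcomp Require Import generic_quotient.
From mathcomp Require Import boolp classical_sets filter cardinality.
From mathcomp Require Import ring zify.
Set Implicit Arguments. Unset Strict Implicit. Unset Printing Implicit Defensive.
Import GRing.Theory.
Local Open Scope ring_scope.
Local Open Scope classical_set_scope.
Local Open Scope quotient_scope.

Section U.
Variables (S : Type) (D : set_system S) (DU : UltraFilter D) (F : S -> fieldType).
Local Notation U := (ultraprod DU F).
Definition ulimf (a : prodR F) : U := ulim DU a.
HB.instance Definition _ := GRing.RMorphism.copy ulimf (\pi_(ultraprod_ring DU F)).
Lemma ulimE a : ulim DU a = ulimf a. Proof. by []. Qed.

Let FD : ProperFilter D := @ultra_proper _ _ DU.

Lemma prodR_subE (a b : prodR F) s : (a - b) s = a s - b s. Proof. by []. Qed.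
Lemma prodR_addE (a b : prodR F) s : (a + b) s = a s + b s. Proof. by []. Qed.
Lemma prodR_mulE (a b : prodR F) s : (a * b) s = a s * b s. Proof. by []. Qed.
Lemma prodR_0E s : (0 : prodR F) s = 0. Proof. by []. Qed.
Lemma prodR_sumE (I : Type) (r : seq I) (P : pred I) (f : I -> prodR F) s :
  (\sum_(i <- r | P i) f i) s = \sum_(i <- r | P i) f i s.
Proof. by elim/big_rec2: _ => // i y1 y2 _ <-. Qed.

Lemma ulimf_eq0 a : ulimf a = 0 <-> D [set s | a s = 0].
Proof.
rewrite -(rmorph0 ulimf); split.
  move/eqP; rewrite /ulimf /ulim piE Quotient.equivE => /asboolP.
  by apply: filterS => s /=; rewrite subr0.
move=> H; apply/eqP; rewrite /ulimf /ulim piE Quotient.equivE; apply/asboolP.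
by apply: filterS H => s /=; rewrite prodR_subE prodR_0E subr0.
Qed.

Lemma ulimf_eq a b : ulimf a = ulimf b <-> D [set s | a s = b s].
Proof.
split => [E|H].
  have /ulimf_eq0 : ulimf (a - b) = 0.
    by have := rmorphB ulimf a b; rewrite /= E subrr.
  by apply: filterS => s /=; rewrite prodR_subE => /eqP; rewrite subr_eq0 => /eqP.
apply/eqP; rewrite -subr_eq0 -(rmorphB ulimf); apply/eqP/ulimf_eq0; apply: filterS H => s /= E.
by rewrite prodR_subE E subrr.
Qed.

Lemma ulimf_repr x : ulimf (repr x) = x.
Proof. exact: reprK. Qed.

Lemma filter_bigI (N : nat) (A : nat -> set S) :
  (forall i, (i < N)%N -> D (A i)) -> D [set s | forall i, (i < N)%N -> A i s].
Proof.
elim: N => [|N IH] H.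
  by apply: filterS filterT => s _ i.
apply: filterS (filterI (IH (fun i hi => H i (ltnW hi))) (H N (ltnSn N))).
move=> s [/= h1 h2] i; rewrite ltnS leq_eqVlt => /orP[/eqP->//|]; exact: h1.
Qed.

Definition PL (N : nat) (f : forall s, {poly F s}) : {poly U} :=
  \poly_(i < N) ulimf (fun s => (f s)`_i).

Definition bnd N (f : forall s, {poly F s}) := forall s, (size (f s) <= N)%N.

Lemma PL_coef N f i : bnd N f -> (PL N f)`_i = ulimf (fun s => (f s)`_i).
Proof.
move=> hb; rewrite coef_poly; case: ifP => // /negbT; rewrite -leqNgt => hi.
symmetry; apply/ulimf_eq0; apply: filterS filterT => s _ /=.
by apply: nth_default; exact: leq_trans (hb s) hi.
Qed.

Lemma PL_size N f : (size (PL N f) <= N)%N.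
Proof. exact: size_poly. Qed.

Lemma PL_ext N f g : D [set s | f s = g s] -> PL N f = PL N g.
Proof.
move=> H; apply/polyP => i; rewrite !coef_poly; case: ifP => // _.
by apply/ulimf_eq; apply: filterS H => s /= ->.
Qed.

Lemma PL_eq N f g : bnd N f -> bnd N g -> PL N f = PL N g -> D [set s | f s = g s].
Proof.
move=> hf hg E.
have: D [set s | forall i, (i < N)%N -> (f s)`_i = (g s)`_i].
  apply: filter_bigI => i hi; apply/ulimf_eq.
  by rewrite -(PL_coef _ hf) -(PL_coef _ hg) E.
apply: filterS => s /= H; apply/polyP => i.
case: (ltnP i N) => hi; first exact: H.
by rewrite !nth_default //; [exact: leq_trans (hg s) hi|exact: leq_trans (hf s) hi].
Qed.

Lemma PL_bnd N N' f : bnd N f -> (N <= N')%N -> PL N' f = PL N f.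
Proof.
move=> hf hN; apply/polyP => i; rewrite (PL_coef _ hf) PL_coef //.
by move=> s; exact: leq_trans (hf s) hN.
Qed.

Lemma PL_mul N1 N2 f g : bnd N1 f -> bnd N2 g ->
  PL (N1 + N2) (fun s => f s * g s) = PL N1 f * PL N2 g.
Proof.
move=> hf hg.
have hfg : bnd (N1 + N2) (fun s => f s * g s).
  move=> s; apply: leq_trans (size_mul_leq _ _) _.
  by apply: leq_trans (leq_pred _) _; apply: leq_add.
apply/polyP => k; rewrite PL_coef // coefM.
under [in RHS]eq_bigr do rewrite !PL_coef // -rmorphM.
rewrite -rmorph_sum; congr (ulimf _); apply: functional_extensionality_dep => s.
by rewrite prodR_sumE coefM.
Qed.

Lemma PL_add N f g : PL N (fun s => f s + g s) = PL N f + PL N g.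
Proof.
apply/polyP => i; rewrite coefD !coef_poly; case: ifP; rewrite ?addr0 // => _.
rewrite -rmorphD; congr (ulimf _); apply: functional_extensionality_dep => s.
by rewrite prodR_addE coefD.
Qed.

Lemma PL_sum N (I : Type) (r : seq I) (f : I -> forall s, {poly F s}) :
  PL N (fun s => \sum_(i <- r) f i s) = \sum_(i <- r) PL N (f i).
Proof.
elim: r => [|i r IH].
  rewrite big_nil; apply/polyP => j; rewrite coef_poly coef0; case: ifP => // _.
  by apply/ulimf_eq0; apply: filterS filterT => s _ /=; rewrite big_nil coef0.
rewrite big_cons -IH -PL_add; congr PL; apply: functional_extensionality_dep => s.
by rewrite big_cons.
Qed.

Lemma PL_repr (p : {poly U}) : PL (size p) (fun s => \poly_(i < size p) (repr p`_i : prodR F) s) = p.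
Proof.
apply/polyP => i; rewrite coef_poly; case: ifP => hi; last first.
  by rewrite nth_default // leqNgt hi.
rewrite -[RHS]ulimf_repr; congr ulimf; apply: functional_extensionality_dep => s.
by rewrite coef_poly hi.
Qed.

Lemma bnd_poly N (h : forall s, nat -> F s) : bnd N (fun s => \poly_(i < N) h s i).
Proof. by move=> s; apply: size_poly. Qed.


Definition PL2 (M e : nat) (G : forall s, {poly {poly F s}}) : {poly {poly U}} :=
  \poly_(i < M) PL e (fun s => (G s)`_i).

Definition bnd2 M e (G : forall s, {poly {poly F s}}) :=
  forall s, (size (G s) <= M)%N /\ forall i, leq (size (G s)`_i) e.

Lemma PL2_coef M e G i : bnd2 M e G -> (PL2 M e G)`_i = PL e (fun s => (G s)`_i).
Proof.
move=> hb; rewrite coef_poly; case: ifP => // /negbT; rewrite -leqNgt => hi.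
apply/polyP => j; rewrite coef0 coef_poly; case: ifP => // _.
symmetry; apply/ulimf_eq0; apply: filterS filterT => s _ /=.
by rewrite (nth_default _ (leq_trans (hb s).1 hi)) coef0.
Qed.

Lemma PL2_ext M e G H : D [set s | G s = H s] -> PL2 M e G = PL2 M e H.
Proof.
move=> E; apply/polyP => i; rewrite !coef_poly; case: ifP => // _.
by apply: PL_ext; apply: filterS E => s /= ->.
Qed.

Lemma size_sum_le (T : nzRingType) (I : Type) (r : seq I) (P : pred I) (f : I -> {poly T}) n :
  (forall i, P i -> (size (f i) <= n)%N) -> leq (size (\sum_(i <- r | P i) f i)) n.
Proof.
move=> H; elim/big_rec: _ => [|i p Pi IH]; first by rewrite size_poly0.
by apply: leq_trans (size_polyD _ _) _; rewrite geq_max H.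
Qed.

Lemma PL2_mul M1 M2 e1 e2 G H : bnd2 M1 e1 G -> bnd2 M2 e2 H ->
  PL2 (M1 + M2) (e1 + e2) (fun s => G s * H s) = PL2 M1 e1 G * PL2 M2 e2 H.
Proof.
move=> hG hH.
have hGH : bnd2 (M1 + M2) (e1 + e2) (fun s => G s * H s).
  move=> s; split.
    apply: leq_trans (size_mul_leq _ _) _.
    by apply: leq_trans (leq_pred _) _; apply: leq_add; [exact: (hG s).1|exact: (hH s).1].
  move=> k; rewrite coefM; apply: size_sum_le => i _.
  apply: leq_trans (size_mul_leq _ _) _.
  by apply: leq_trans (leq_pred _) _; apply: leq_add; [exact: (hG s).2|exact: (hH s).2].
apply/polyP => k; rewrite PL2_coef // coefM.
transitivity (\sum_(j < k.+1) PL (e1+e2) (fun s => (G s)`_j * (H s)`_(k-j))).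
  rewrite -PL_sum; congr PL; apply: functional_extensionality_dep => s.
  by rewrite coefM.
apply: eq_bigr => j _; rewrite !PL2_coef // -PL_mul //.
- by move=> s; exact: (hG s).2.
- by move=> s; exact: (hH s).2.
Qed.

Definition lift2 n e (Q : {poly {poly U}}) : forall s, {poly {poly F s}} :=
  fun s => \poly_(i < n) \poly_(j < e) (repr Q`_i`_j : prodR F) s.

Lemma bnd2_lift2 n e Q : bnd2 n e (lift2 n e Q).
Proof.
move=> s; split; first exact: size_poly.
by move=> i; rewrite coef_poly; case: ifP => _; [exact: size_poly|rewrite size_poly0].
Qed.

Lemma PL2_lift2 n e (Q : {poly {poly U}}) : (size Q <= n)%N -> (forall i, leq (size Q`_i) e) ->
  PL2 n e (lift2 n e Q) = Q.
Proof.
move=> hn he; apply/polyP => i; rewrite coef_poly; case: ifP => hi; last first.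
  by rewrite nth_default // leqNgt; apply/negP => h; move: hi; rewrite (leq_trans h hn).
apply/polyP => j; rewrite coef_poly; case: ifP => hj; last first.
  by rewrite nth_default // (leq_trans (he i)) // leqNgt hj.
rewrite -[RHS]ulimf_repr; congr ulimf; apply: functional_extensionality_dep => s.
by rewrite /lift2 coef_poly hi coef_poly hj.
Qed.

End U.

Lemma frac_den_neq0 (R : idomainType) (x : {fraction R}) : \d_(repr x) != 0.
Proof. exact: denom_ratioP. Qed.

Lemma frac_numden (R : idomainType) (x : {fraction R}) :
  x * (tofrac \d_(repr x)) = tofrac \n_(repr x).
Proof.
rewrite -{1}[x]reprK.
unlock tofrac.
transitivity (\pi_({fraction R}) (FracField.mulf (repr x) (Ratio \d_(repr x) 1))).
  symmetry; exact: (FracField.pi_mul (repr x) (Ratio \d_(repr x) 1)).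
apply/eqmodP; rewrite /= FracField.equivfE /FracField.mulf.
rewrite !numden_Ratio ?oner_neq0 ?mulf_neq0 ?oner_neq0 ?denom_ratioP //.
by rewrite !mulr1 mulrC.
Qed.


Lemma frac_repr (R : idomainType) (x : {fraction R}) :
  x = tofrac \n_(repr x) / tofrac \d_(repr x).
Proof.
have d0 : tofrac \d_(repr x) != 0 :> {fraction R} by rewrite tofrac_eq0 frac_den_neq0.
by rewrite -frac_numden mulfK.
Qed.

Lemma common_den (R : idomainType) (p : {poly {fraction R}}) :
  exists a : R, exists q : {poly R}, a != 0 /\ map_poly (@tofrac _) q = tofrac a *: p.
Proof.
elim/poly_ind: p => [|p c [a [q [a0 Eq]]]].
  by exists 1, 0; rewrite oner_neq0 map_poly0 scaler0.
set n := \n_(repr c); set d := \d_(repr c).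
have d0 : d != 0 := frac_den_neq0 c.
have Ec : c * tofrac d = tofrac n := frac_numden c.
exists (a * d), (d%:P * q * 'X + (a * n)%:P); split; first by rewrite mulf_neq0.
rewrite rmorphD rmorphM rmorphM /= map_polyC map_polyX map_polyC /= Eq.
rewrite -!mul_polyC !rmorphM /= -Ec mulrDr !polyCM; ring.
Qed.

Lemma map_inj0 (A B : nzRingType) (f : A -> B) : injective f -> f 0 = 0 ->
  injective (map_poly f).
Proof.
move=> inj f0 p q E; apply/polyP => i.
by apply: inj; rewrite -!coef_map_id0 // E.
Qed.

Section Gauss.
Variable k : fieldType.
Local Notation R := {poly k}.

Lemma irr_coprime (pi a : R) : irreducible_poly pi -> ~~ (pi %| a) -> coprimep pi a.
Proof.
move=> ip npa; rewrite coprimep_def; apply/negPn/negP => hg.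
have : gcdp pi a %= pi by apply: ip hg (dvdp_gcdl _ _).
move=> /eqp_dvdl => h; move: npa; rewrite -h.
by rewrite dvdp_gcdr.
Qed.

Lemma irr_prime (pi a b : R) : irreducible_poly pi -> pi %| a * b -> pi %| a \/ pi %| b.
Proof.
move=> ip hab; have [ha|ha] := boolP (pi %| a); first by left.
by right; rewrite -(Gauss_dvdpr _ (irr_coprime ip ha)).
Qed.

Lemma irr_div (p : R) : (1 < size p)%N -> exists pi, irreducible_poly pi /\ pi %| p.
Proof.
have [n] := ubnP (size p); elim: n p => // n IH p /ltnSE hn hp.
have [ip|nip] := pselect (irreducible_poly p); first by exists p; rewrite dvdpp.
have [q [q1 [qp nqp]]] : exists q : R, size q != 1%N /\ q %| p /\ ~~ (q %= p).
  apply: contrapT => H; apply: nip; split => // q q1 qp.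
  by apply: contrapT => nq; apply: H; exists q; split => //; split => //; apply/negP.
have p0 : p != 0 by rewrite -size_poly_gt0 (ltn_trans _ hp).
have q0 : q != 0 by apply: contraTneq qp => ->; rewrite dvd0p.
have sq : (size q < size p)%N.
  rewrite ltn_neqAle dvdp_leq // andbT; apply: contraNneq nqp => /eqP.
  by rewrite dvdp_size_eqp.
have sq1 : (1 < size q)%N.
  by rewrite ltn_neqAle eq_sym q1 /= size_poly_gt0.
have [pi [ipi piq]] := IH q (leq_trans sq hn) sq1.
by exists pi; split => //; apply: dvdp_trans piq qp.
Qed.

Lemma dvdp_sum (I : Type) (r : seq I) (P : pred I) (f : I -> R) (pi : R) :
  (forall i, P i -> pi %| f i) -> pi %| \sum_(i <- r | P i) f i.
Proof.
move=> H; elim/big_rec: _ => [|i x Pi IH]; first exact: dvdp0.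
by rewrite dvdp_addr ?H.
Qed.

Lemma content_prime (pi : R) (G H : {poly R}) : irreducible_poly pi ->
  (forall i, pi %| (G * H)`_i) -> (forall i, pi %| G`_i) \/ (forall j, pi %| H`_j).
Proof.
move=> ip hGH; apply: contrapT => /not_orP[/existsNP[i0' hi0'] /existsNP[j0' hj0']].
have exi : exists i, ~~ (pi %| G`_i) by exists i0'; apply/negP.
have exj : exists j, ~~ (pi %| H`_j) by exists j0'; apply/negP.
case: (ex_minnP exi) => i0 hi0 mi0.
case: (ex_minnP exj) => j0 hj0 mj0.
have lti : forall i, (i < i0)%N -> pi %| G`_i.
  by move=> i hi; apply: contraTT hi => /mi0; rewrite leqNgt.
have ltj : forall j, (j < j0)%N -> pi %| H`_j.
  by move=> j hj; apply: contraTT hj => /mj0; rewrite leqNgt.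
have := hGH (i0 + j0)%N; rewrite coefM.
have hi : (i0 < (i0 + j0).+1)%N by rewrite ltnS leq_addr.
rewrite (bigD1 (Ordinal hi)) //= addKn dvdp_addl; last first.
  apply: dvdp_sum => i /= ni.
  have [lt|ge] := ltnP i i0; first by apply: dvdp_mulr; apply: lti.
  apply: dvdp_mull; apply: ltj.
  have ne : i != i0 :> nat by apply: contra ni => /eqP e; apply/eqP/val_inj.
  have gt : (i0 < i)%N by rewrite ltn_neqAle eq_sym ne ge.
  have := ltn_ord i; rewrite ltnS => le.
  lia.
by case/(irr_prime ip) => h; [move: hi0|move: hj0]; rewrite h.
Qed.

Lemma strip (pi : R) (G : {poly R}) : irreducible_poly pi -> (forall i, pi %| G`_i) ->
  exists G', G = pi%:P * G' /\ size G' = size G.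
Proof.
move=> ip hG; have pi0 : pi != 0 by apply: irredp_neq0.
exists (map_poly (fun x => x %/ pi) G); split.
  apply/polyP => i; rewrite coefCM coef_map_id0 ?div0p //.
  by rewrite mulrC divpK.
have E : G = pi%:P * map_poly (fun x => x %/ pi) G.
  apply/polyP => i; rewrite coefCM coef_map_id0 ?div0p //.
  by rewrite mulrC divpK.
have [->|G0] := eqVneq G 0; first by rewrite map_poly0.
have G'0 : map_poly (fun x => x %/ pi) G != 0.
  by apply: contraNneq G0 => e; rewrite E e mulr0.
by rewrite [in RHS]E size_mul ?polyC_eq0 // size_polyC pi0.
Qed.

Lemma gauss_core (Q G1 H1 : {poly R}) (c : R) : c != 0 -> G1 * H1 = c%:P * Q ->
  exists G2 H2, G2 * H2 = Q /\ size G2 = size G1 /\ size H2 = size H1.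
Proof.
have [n] := ubnP (size c); elim: n c G1 H1 => // n IH c G1 H1 /ltnSE hn c0 E.
have [sc1|sc1] := leqP (size c) 1%N.
  have Ec := size1_polyC sc1.
  have c00 : c`_0 != 0 by apply: contraNneq c0 => e; rewrite Ec e.
  exists G1, (((c`_0)^-1)%:P%:P * H1); split; last split => //.
    have e1 : (c`_0)^-1%:P * c = 1 by rewrite {2}Ec -polyCM mulVf.
    by rewrite mulrCA E mulrA -polyCM e1 mul1r.
  have [->|H10] := eqVneq H1 0; first by rewrite mulr0.
  rewrite size_mul ?polyC_eq0 ?invr_eq0 // size_polyC polyC_eq0 invr_eq0 c00.
  by rewrite add1n.
have [pi [ipi pic]] := irr_div sc1.
have pi0 : pi != 0 by apply: irredp_neq0.
have hpi : (1 < size pi)%N by case: ipi.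
have Ecp : c = (c %/ pi) * pi by rewrite divpK.
have c'0 : c %/ pi != 0 by apply: contraNneq c0 => e; rewrite Ecp e mul0r.
have sc' : leq (size (c %/ pi)).+1 n.
  rewrite size_divp // -subn1; move: hn hpi sc1; move: (size c) (size pi) => a b; lia.
have hc : forall i, pi %| (G1 * H1)`_i by move=> i; rewrite E coefCM dvdp_mulr.
case: (content_prime ipi hc) => [hG|hH].
  have [G' [EG sG]] := strip ipi hG.
  have E' : G' * H1 = (c %/ pi)%:P * Q.
    apply: (@mulfI _ pi%:P); first by rewrite polyC_eq0.
    by rewrite mulrA -EG E {1}Ecp mulrC polyCM; ring.
  have [G2 [H2 [E2 [s1 s2]]]] := IH _ _ _ sc' c'0 E'.
  by exists G2, H2; rewrite s1 sG s2.
have [H' [EH sH]] := strip ipi hH.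
have E' : G1 * H' = (c %/ pi)%:P * Q.
  apply: (@mulfI _ pi%:P); first by rewrite polyC_eq0.
  by rewrite mulrCA -EH E {1}Ecp mulrC polyCM; ring.
have [G2 [H2 [E2 [s1 s2]]]] := IH _ _ _ sc' c'0 E'.
by exists G2, H2; rewrite s1 s2 sH.
Qed.

Lemma gauss (Q : {poly R}) (G H : {poly {fraction R}}) :
  G * H = map_poly (@tofrac _) Q ->
  exists G2 H2 : {poly R}, G2 * H2 = Q /\ size G2 = size G /\ size H2 = size H.
Proof.
move=> E.
have [a [G1 [a0 EG]]] := common_den G.
have [b [H1 [b0 EH]]] := common_den H.
have inj : injective (@tofrac R) by move=> x y /eqP; rewrite tofrac_eq => /eqP.
have E1 : G1 * H1 = (a * b)%:P * Q.
  apply: (map_inj0 inj (rmorph0 _)) => /=.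
  rewrite !rmorphM /= EG EH map_polyC /= -scalerAl -scalerAr scalerA E -mul_polyC polyCM.
  by rewrite map_polyC.
have [G2 [H2 [E2 [s1 s2]]]] := gauss_core (mulf_neq0 a0 b0) E1.
exists G2, H2; split => //; split.
  by rewrite s1 -(size_map_inj_poly inj (rmorph0 _)) EG size_scale // tofrac_eq0.
by rewrite s2 -(size_map_inj_poly inj (rmorph0 _)) EH size_scale // tofrac_eq0.
Qed.

End Gauss.


Lemma coef_bound (k : fieldType) (G2 H2 Q : {poly {poly k}}) e :
  G2 * H2 = Q -> Q != 0 -> (forall i, leq (size Q`_i) e) -> forall i, leq (size G2`_i) e.
Proof.
move=> E Q0 hQ i.
have G0 : G2 != 0 by apply: contraNneq Q0 => h; rewrite -E h mul0r.
have H0 : H2 != 0 by apply: contraNneq Q0 => h; rewrite -E h mulr0.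
apply: leq_trans (max_size_coefXY _ _) _.
have sQ : leq (sizeY Q) e by apply/bigmax_leqP => j _; apply: hQ.
apply: leq_trans sQ; rewrite !sizeYE -E rmorphM /= size_mul ?swapXY_eq0 //.
have : (0 < size (swapXY H2))%N by rewrite size_poly_gt0 swapXY_eq0.
by case: (size (swapXY H2)) => // m _; rewrite addnS /= leq_addr.
Qed.

Lemma irr_iff (L : fieldType) (p : {poly L}) :
  irreducible_poly p <-> (1 < size p)%N /\
    forall G H, G * H = p -> leq (size G) 1 \/ leq (size H) 1.
Proof.
split.
  move=> ip; split; first by case: ip.
  move=> G H E; have p0 := irredp_neq0 ip.
  have G0 : G != 0 by apply: contraNneq p0 => h; rewrite -E h mul0r.
  have H0 : H != 0 by apply: contraNneq p0 => h; rewrite -E h mulr0.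
  have [sG|sG] := eqVneq (size G) 1%N; first by left; rewrite sG.
  right; have := ip G sG; rewrite -E dvdp_mulIl => /(_ isT) /eqp_size.
  rewrite size_mul // => h.
  have : (0 < size H)%N by rewrite size_poly_gt0.
  move: h; case: (size H) => // [[|m]] //; rewrite addnS /= => h.
  by move=> _; move: h; rewrite -{1}[size G]addn0 => /eqP; rewrite eqn_add2l.
move=> [sp H]; split => // q q1 qp.
have p0 : p != 0 by rewrite -size_poly_gt0 (ltn_trans _ sp).
have q0 : q != 0 by apply/eqP => h; move: qp; rewrite h dvd0p; apply/negP.
have E := divpK qp.
case: (H _ _ E) => hs; last first.
  by move: q1 hs; rewrite leq_eqVlt ltnS leqn0 size_poly_eq0 (negPf q0) orbF => /negPf ->.
have dq0 : p %/ q != 0 by apply: contraNneq p0 => h; rewrite -E h mul0r.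
rewrite (size1_polyC hs) in E.
have c0 : (p %/ q)`_0 != 0 by apply: contraNneq dq0 => h; rewrite (size1_polyC hs) h.
by rewrite -E mul_polyC eqp_sym eqp_scale.
Qed.

Lemma irr_map (L M : fieldType) (f : {rmorphism L -> M}) (p : {poly L}) :
  irreducible_poly (map_poly f p) -> irreducible_poly p.
Proof.
move=> /irr_iff [sp H]; apply/irr_iff; rewrite size_map_poly in sp; split => // G1 H1 E.
have := H (map_poly f G1) (map_poly f H1); rewrite -rmorphM E !size_map_poly.
by apply.
Qed.


Section Main.
Variables (S : Type) (D : set_system S) (DU : UltraFilter D) (F : S -> fieldType).
Let FD : ProperFilter D := @ultra_proper _ _ DU.
Local Notation K := (fK DU F).
Definition Fr := (fun s => ({fraction {poly F s}} : fieldType)).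
Local Notation UH := (ultrahull DU F).
Local Notation A := (A_to_U DU F).
Implicit Types p q : {poly K}.

Definition liftK (q : {poly K}) : forall s, {poly F s} :=
  fun s => \poly_(i < size q) (repr q`_i : prodR F) s.

Lemma A_E q : A q = ulimf DU (F:=Fr) (fun s => tofrac (liftK q s)).
Proof. by []. Qed.

Lemma PL_liftK q : PL DU (size q) (liftK q) = q.
Proof. exact: PL_repr. Qed.

Lemma bnd_liftK q : bnd (size q) (liftK q).
Proof. by move=> s; apply: size_poly. Qed.

Lemma A_PL N f q : bnd N f -> PL DU N f = q -> A q = ulimf DU (F:=Fr) (fun s => tofrac (f s)).
Proof.
move=> hf Eq; rewrite A_E; apply/ulimf_eq.
have h1 : bnd (maxn N (size q)) f by move=> s; rewrite (leq_trans (hf s)) ?leq_maxl.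
have h2 : bnd (maxn N (size q)) (liftK q).
  by move=> s; rewrite (leq_trans (bnd_liftK q s)) ?leq_maxr.
have := @PL_eq _ _ DU _ _ _ _ h2 h1.
rewrite (PL_bnd DU (bnd_liftK q)) ?leq_maxr // (PL_bnd DU hf) ?leq_maxl //.
rewrite PL_liftK Eq => /(_ erefl).
by apply: filterS => s /= ->.
Qed.

Lemma A_mul p q : A (p * q) = A p * A q.
Proof.
rewrite (@A_PL (size p + size q) (fun s => liftK p s * liftK q s)).
- rewrite !A_E -rmorphM; congr ulimf; apply: functional_extensionality_dep => s.
  by rewrite prodR_mulE rmorphM.
- move=> s; apply: leq_trans (size_mul_leq _ _) _.
  by apply: leq_trans (leq_pred _) _; apply: leq_add; apply: bnd_liftK.
- by rewrite PL_mul ?PL_liftK //; apply: bnd_liftK.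
Qed.

Lemma A_add p q : A (p + q) = A p + A q.
Proof.
have hp : bnd (maxn (size p) (size q)) (liftK p).
  by move=> s; rewrite (leq_trans (bnd_liftK p s)) ?leq_maxl.
have hq : bnd (maxn (size p) (size q)) (liftK q).
  by move=> s; rewrite (leq_trans (bnd_liftK q s)) ?leq_maxr.
rewrite (@A_PL (maxn (size p) (size q)) (fun s => liftK p s + liftK q s)).
- rewrite !A_E -rmorphD; congr ulimf; apply: functional_extensionality_dep => s.
  by rewrite prodR_addE rmorphD.
- by move=> s; apply: leq_trans (size_polyD _ _) _; rewrite geq_max hp hq.
- by rewrite PL_add (PL_bnd DU (bnd_liftK p)) ?leq_maxl // (PL_bnd DU (bnd_liftK q)) ?leq_maxr // !PL_liftK.
Qed.

Lemma A_opp p : A (- p) = - A p.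
Proof.
have A0 : A 0 = 0.
  have h := A_add 0 0; rewrite addr0 in h.
  have : A 0 + A 0 - A 0 = A 0 - A 0 by rewrite -h.
  by rewrite addrK subrr.
by apply: (addIr (A p)); rewrite -A_add !addNr.
Qed.

Lemma A_one : A 1 = 1.
Proof.
rewrite (@A_PL 1 (fun s => 1)).
- by rewrite -(rmorph1 (ulimf DU (F:=Fr))); congr ulimf; apply: functional_extensionality_dep => s; rewrite rmorph1.
- by move=> s; rewrite size_poly1.
- apply/polyP => i; rewrite coef_poly coef1; case: i => [|i] //=.
  by rewrite -(rmorph1 (ulimf DU (F:=F))); congr ulimf; apply: functional_extensionality_dep => s; rewrite coef1.
Qed.

Lemma A_eq0 q : A q = 0 -> q = 0.
Proof.
rewrite A_E => /ulimf_eq0 H.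
transitivity (PL DU (size q) (liftK q)); first by rewrite PL_liftK.
rewrite (@PL_ext _ _ DU _ _ _ (fun s => 0)); last first.
  by apply: filterS H => s /= /eqP; rewrite tofrac_eq0 => /eqP.
apply/polyP => i; rewrite coef_poly coef0; case: ifP => // _.
by apply/ulimf_eq0; apply: filterS filterT => s _ /=; rewrite coef0.
Qed.

Lemma A_zmod : zmod_morphism A.
Proof. by move=> x y; rewrite A_add A_opp. Qed.
HB.instance Definition _ := GRing.isZmodMorphism.Build _ _ A A_zmod.
Lemma A_monoid : monoid_morphism A.
Proof. by split; [exact: A_one|exact: A_mul]. Qed.
HB.instance Definition _ := GRing.isMonoidMorphism.Build _ _ A A_monoid.

Lemma A_neq0 q : q != 0 -> A q != 0.
Proof. by apply: contraNneq => /A_eq0 ->. Qed.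

Local Notation FU := (F_to_U DU F).

Lemma FU_frac a b : b != 0 -> FU (tofrac a / tofrac b) = A a / A b.
Proof.
move=> b0; set x := _ / _; rewrite /F_to_U.
have e := frac_numden x.
have d0 := frac_den_neq0 x.
have e2 : a * \d_(repr x) = \n_(repr x) * b.
  apply/eqP; rewrite -tofrac_eq !rmorphM /= -e /x.
  by rewrite mulrAC divfK // tofrac_eq0.
apply/eqP; rewrite eqr_div ?A_neq0 //; apply/eqP.
by rewrite -!A_mul e2.
Qed.

Lemma FU_tofrac a : FU (tofrac a) = A a.
Proof.
by rewrite -[tofrac a]divr1 -(rmorph1 (@tofrac _)) FU_frac ?oner_neq0 // rmorph1 divr1.
Qed.

Lemma FU_add x y : FU (x + y) = FU x + FU y.
Proof.
rewrite [x]frac_repr [y]frac_repr.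
set n1 := \n_(repr x); set d1 := \d_(repr x); set n2 := \n_(repr y); set d2 := \d_(repr y).
have d10 : d1 != 0 := frac_den_neq0 x.
have d20 : d2 != 0 := frac_den_neq0 y.
have t1 : tofrac d1 != 0 :> {fraction _} by rewrite tofrac_eq0.
have t2 : tofrac d2 != 0 :> {fraction _} by rewrite tofrac_eq0.
have -> : tofrac n1 / tofrac d1 + tofrac n2 / tofrac d2 =
  tofrac (n1 * d2 + n2 * d1) / tofrac (d1 * d2).
  rewrite (addf_div (tofrac n1) (tofrac n2) t1 t2).
  by rewrite tofracD !tofracM.
rewrite !FU_frac ?mulf_neq0 //.
rewrite A_add !A_mul.
have a1 := A_neq0 d10; have a2 := A_neq0 d20.
by rewrite (addf_div (A n1) (A n2) a1 a2).
Qed.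
Lemma FU_mul x y : FU (x * y) = FU x * FU y.
Proof.
rewrite [x]frac_repr [y]frac_repr.
set n1 := \n_(repr x); set d1 := \d_(repr x); set n2 := \n_(repr y); set d2 := \d_(repr y).
have d10 : d1 != 0 := frac_den_neq0 x.
have d20 : d2 != 0 := frac_den_neq0 y.
have -> : tofrac n1 / tofrac d1 * (tofrac n2 / tofrac d2) =
  tofrac (n1 * n2) / tofrac (d1 * d2).
  rewrite (mulf_div (tofrac n1) (tofrac d1)).
  by rewrite !tofracM.
rewrite !FU_frac ?mulf_neq0 //.
rewrite !A_mul.
by rewrite (mulf_div (A n1) (A d1)).
Qed.

Lemma FU_opp x : FU (- x) = - FU x.
Proof.
have h : FU 0 = 0.
  have := FU_add 0 0; rewrite addr0 => h.
  have : FU 0 + FU 0 - FU 0 = FU 0 - FU 0 by rewrite -h.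
  by rewrite addrK subrr.
by apply: (addIr (FU x)); rewrite -FU_add !addNr.
Qed.

Lemma FU_one : FU 1 = 1.
Proof. by rewrite -(rmorph1 (@tofrac _)) FU_tofrac rmorph1. Qed.

Lemma FU_zmod : zmod_morphism FU.
Proof. by move=> x y; rewrite FU_add FU_opp. Qed.
HB.instance Definition _ := GRing.isZmodMorphism.Build _ _ FU FU_zmod.
Lemma FU_monoid : monoid_morphism FU.
Proof. by split; [exact: FU_one|exact: FU_mul]. Qed.
HB.instance Definition _ := GRing.isMonoidMorphism.Build _ _ FU FU_monoid.

End Main.


Section Desc.
Variables (S : Type) (D : set_system S) (DU : UltraFilter D) (F : S -> fieldType).
Let FD : ProperFilter D := @ultra_proper _ _ DU.
Local Notation K := (fK DU F).
Local Notation UH := (ultrahull DU F).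
Local Notation A := (A_to_U DU F).

Lemma PL2_bnd M M' e e' (G : forall s, {poly {poly F s}}) : bnd2 M e G -> (M <= M')%N -> (e <= e')%N ->
  PL2 DU M' e' G = PL2 DU M e G.
Proof.
move=> hG hM he.
have hG' : bnd2 M' e' G.
  by move=> s; split; [apply: leq_trans hM; exact: (hG s).1|move=> i; apply: leq_trans he; exact: (hG s).2].
apply/polyP => i; rewrite (PL2_coef DU _ hG') (PL2_coef DU _ hG).
by apply: PL_bnd => // s; exact: (hG s).2.
Qed.

Lemma A_inj : injective A.
Proof.
move=> x y E; apply/eqP; rewrite -subr_eq0; apply/eqP; apply: A_eq0.
by rewrite A_add A_opp E subrr.
Qed.

Lemma descent (Q : {poly {poly K}}) (G H : {poly UH}) :
  G * H = map_poly A Q -> (1 < size G)%N -> (1 < size H)%N ->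
  exists G' H' : {poly {poly K}}, G' * H' = Q /\ (1 < size G')%N /\ (1 < size H')%N.
Proof.
move=> E sG sH.
have G0 : G != 0 by rewrite -size_poly_gt0 (ltn_trans _ sG).
have H0 : H != 0 by rewrite -size_poly_gt0 (ltn_trans _ sH).
have Q0 : Q != 0.
  apply: contraNneq (mulf_neq0 G0 H0) => h; by rewrite E h map_poly0.
set n := size Q; set e := sizeY Q.
have he : forall i, leq (size Q`_i) e by move=> i; apply: max_size_coefXY.
set Qs := lift2 (DU:=DU) (F:=F) n e Q.
have hQs : bnd2 n e Qs := bnd2_lift2 _ _ _.
have PQ : PL2 DU n e Qs = Q := PL2_lift2 (leqnn _) he.
have sAQ : size (map_poly A Q) = n by rewrite size_map_inj_poly //; [exact: A_inj|exact: rmorph0].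
have sGH : (size G + size H).-1 = n by rewrite -size_mul // E.
pose Gs := fun s => \poly_(i < size G) (repr G`_i : prodR (Fr F)) s.
pose Hs := fun s => \poly_(i < size H) (repr H`_i : prodR (Fr F)) s.
have bGs : bnd (size G) Gs by move=> s; apply: size_poly.
have bHs : bnd (size H) Hs by move=> s; apply: size_poly.
have PGs : PL DU (size G) Gs = G := PL_repr G.
have PHs : PL DU (size H) Hs = H := PL_repr H.
have MQ : map_poly A Q = PL DU n (fun s => map_poly (@tofrac _) (Qs s)).
  apply/polyP => i; rewrite coef_map /= PL_coef; last first.
    move=> s; rewrite size_map_inj_poly; [exact: (hQs s).1| |exact: rmorph0].
    by move=> x y /eqP; rewrite tofrac_eq => /eqP.
  have bi : bnd e (fun s => (Qs s)`_i) by move=> s; exact: (hQs s).2.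
  rewrite (A_PL bi); last by rewrite -(PL2_coef DU _ hQs) PQ.
  by congr ulimf; apply: functional_extensionality_dep => s; rewrite coef_map.
have tinj : forall s, injective (@tofrac {poly F s}).
  by move=> s x y /eqP; rewrite tofrac_eq => /eqP.
set M := (size G + size H)%N.
have nM : (n <= M)%N by rewrite -sGH leq_pred.
have bGH : bnd M (fun s => Gs s * Hs s).
  move=> s; apply: leq_trans (size_mul_leq _ _) _.
  by apply: leq_trans (leq_pred _) _; apply: leq_add.
have bQ : bnd M (fun s => map_poly (@tofrac _) (Qs s)).
  move=> s; rewrite size_map_inj_poly; [|exact: tinj|exact: rmorph0].
  exact: leq_trans (hQs s).1 nM.
have good1 : D [set s | Gs s * Hs s = map_poly (@tofrac _) (Qs s)].
  apply: (@PL_eq _ _ DU _ _ _ _ bGH bQ).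
  have bQn : bnd n (fun s => map_poly (@tofrac _) (Qs s)).
    move=> s; rewrite size_map_inj_poly; [exact: (hQs s).1|exact: tinj|exact: rmorph0].
  by rewrite PL_mul // PGs PHs E MQ (PL_bnd DU bQn nM).
have good2 : D [set s | Qs s != 0].
  case: (in_ultra_setVsetC [set s | Qs s != 0] DU) => // HD.
  exfalso; move/negP: Q0; apply; apply/eqP.
  rewrite -PQ (@PL2_ext _ _ DU _ _ _ _ (fun s => 0)); last first.
    by apply: filterS HD => s /= /negP; rewrite negbK => /eqP.
  apply/polyP => i; rewrite coef_poly coef0; case: ifP => // _.
  apply/polyP => j; rewrite coef_poly coef0; case: ifP => // _.
  by apply/ulimf_eq0; apply: filterS filterT => s _ /=; rewrite !coef0.
pose good s := exists GH : {poly {poly F s}} * {poly {poly F s}},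
  GH.1 * GH.2 = Qs s /\ (size GH.1 <= size G)%N /\ (size GH.2 <= size H)%N /\
  (forall i, leq (size GH.1`_i) e) /\ (forall i, leq (size GH.2`_i) e).
have goodD : D good.
  apply: filterS (filterI good1 good2) => s [/= E1 Q0s].
  have [G2 [H2 [E2 [s1 s2]]]] := gauss E1.
  exists (G2, H2) => /=; split => //; split; first by rewrite s1; exact: bGs.
  split; first by rewrite s2; exact: bHs.
  split; first exact: (coef_bound E2 Q0s (hQs s).2).
  have E3 : H2 * G2 = Qs s by rewrite mulrC.
  exact: (coef_bound E3 Q0s (hQs s).2).
pose pick s : {poly {poly F s}} * {poly {poly F s}} :=
  if pselect (good s) is left h then projT1 (cid h) else (0, 0).
have pickP : forall s, good s -> (pick s).1 * (pick s).2 = Qs s.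
  move=> s gs; rewrite /pick; case: pselect => // h.
  by have [] := projT2 (cid h).
have bG2 : bnd2 (size G) e (fun s => (pick s).1).
  move=> s; rewrite /pick; case: pselect => [h|_] /=.
    by have [_ [h1 [_ [h2 _]]]] := projT2 (cid h); split.
  by split => [|i]; rewrite ?coef0 size_poly0.
have bH2 : bnd2 (size H) e (fun s => (pick s).2).
  move=> s; rewrite /pick; case: pselect => [h|_] /=.
    by have [_ [_ [h1 [_ h2]]]] := projT2 (cid h); split.
  by split => [|i]; rewrite ?coef0 size_poly0.
pose G' := PL2 DU (size G) e (fun s => (pick s).1).
pose H' := PL2 DU (size H) e (fun s => (pick s).2).
have EQ : G' * H' = Q.
  rewrite -PL2_mul // (@PL2_ext _ _ DU _ _ _ _ Qs); last first.
    by apply: filterS goodD => s /pickP.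
  by rewrite (PL2_bnd hQs nM (leq_addr _ _)).
have G'0 : G' != 0 by apply: contraNneq Q0 => h; rewrite -EQ h mul0r.
have H'0 : H' != 0 by apply: contraNneq Q0 => h; rewrite -EQ h mulr0.
have sG' : (size G' <= size G)%N by apply: size_poly.
have sH' : (size H' <= size H)%N by apply: size_poly.
have : (size G' + size H').-1 = n by rewrite -size_mul // EQ.
rewrite -sGH => hs.
have hs' : (size G' + size H' = size G + size H)%N.
  have p1 : (0 < size G')%N by rewrite size_poly_gt0.
  have p2 : (0 < size G)%N by rewrite size_poly_gt0.
  move: hs p1 p2; rewrite -!subn1; move: (size G') (size H') (size G) (size H) => a b c d; lia.
exists G', H'; split => //.
split.
  have : (size G <= size G')%N.
    by rewrite -(leq_add2r (size H)) -hs' leq_add2l.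
  by move=> h; apply: leq_trans h.
have : (size H <= size H')%N.
  by rewrite -(leq_add2l (size G)) -hs' leq_add2r.
by move=> h; apply: leq_trans h.
Qed.

End Desc.

Theorem mainTheorem3 (S : Type) (D : set_system S) (DU : UltraFilter D)
  (S_infinite : ~ finite_set [set: S])
  (D_nonprincipal : forall s : S, ~ D [set s])
  (F : S -> fieldType) (P : {poly fF DU F}) :
  irreducible_poly P <-> irreducible_poly (map_poly (F_to_U DU F) P).
Proof.
split; last exact: irr_map.
move=> ip; have [sP irrP] := (irr_iff P).1 ip.
apply/irr_iff; split; first by rewrite size_map_poly.
move=> G H E.
have [sG|sG] := leqP (size G) 1; first by left.
have [sH|sH] := leqP (size H) 1; first by right.
exfalso.
have [a [Q [a0 EQ]]] := common_den P.
have Aa0 : A_to_U DU F a != 0 := A_neq0 a0.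
have E2 : (A_to_U DU F a *: G) * H = map_poly (A_to_U DU F) Q.
  have -> : map_poly (A_to_U DU F) Q = map_poly (F_to_U DU F) (map_poly (@tofrac _) Q).
    rewrite -map_poly_comp; apply: eq_map_poly => x /=.
    by rewrite FU_tofrac.
  by rewrite EQ map_polyZ /= FU_tofrac -E scalerAl.
have sG2 : (1 < size (A_to_U DU F a *: G))%N by rewrite size_scale.
have [G' [H' [EGH [sG' sH']]]] := descent E2 sG2 sH.
have tinj : injective (@tofrac {poly fK DU F}).
  by move=> x y /eqP; rewrite tofrac_eq => /eqP.
have ta0 : tofrac a != 0 :> fF DU F by rewrite tofrac_eq0.
have EP : ((tofrac a)^-1 *: map_poly (@tofrac _) G') * map_poly (@tofrac _) H' = P.
  rewrite -scalerAl -rmorphM /= EGH EQ scalerA mulVf // scale1r.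
  done.
case: (irrP _ _ EP).
  rewrite size_scale ?invr_eq0 // (size_map_inj_poly tinj (rmorph0 _)).
  by rewrite leqNgt sG'.
rewrite (size_map_inj_poly tinj (rmorph0 _)).
by rewrite leqNgt sH'.
Qed.
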